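(* Let $\mathbb{K}$ be an algebraically closed field, let $Z=m_1p_1+\cdots+m_sp_s\subseteq\mathbb{P}^N_{\mathbb{K}}$ be a nonzero fat point subscheme, and let $I=I(Z)$. Let $m,r$ be positive integers. If $$m\geq \max\left(\frac{\operatorname{satdeg}(I^r)}{\widehat{\alpha}(I(Z))},\,r\right),$$ then $I^{(m)}\subseteq I^r$.
   Context: $p_1,\ldots,p_s$ are distinct points, $m_i$ nonnegative integers not all zero. $R=\mathbb{K}[x_0,\ldots,x_N]$; $I(p)$ is the ideal of forms vanishing at $p$; $I(Z)=\bigcap_i I(p_i)^{m_i}$; the $m$th symbolic power is $I^{(m)}=I(mZ)=\bigcap_i I(p_i)^{mm_i}$. For a homogeneous ideal $J$, $[J]_t$ is its degree-$t$ homogeneous component and $\alpha(J)$ the least $t$ with $[J]_t\neq0$; $\widehat{\alpha}(I(Z))=\inf_{m>0}\alpha(I(mZ))/m$. The saturation degree $\operatorname{satdeg}(I^r)$ is the least $t$ such that $[I^r]_j=[I^{(r)}]_j$ for all $j\geq t$. *)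

(* Defs.v *)
From Stdlib Require Import Reals ClassicalEpsilon.
From Coquelicot Require Import Rbar Lub.
From HB Require Import structures.
From mathcomp Require Import all_boot all_order all_algebra.
From mathcomp Require Import mpoly.

Set Implicit Arguments.
Unset Strict Implicit.
Unset Printing Implicit Defensive.

Import GRing.Theory.
Local Open Scope ring_scope.

Section FatPoints.
Variables (K : closedFieldType) (N : nat).

Local Notation R := {mpoly K[N.+1]}.

Definition pset := R -> Prop.

(* f is a form (homogeneous polynomial) of degree t (0 is a form of every degree) *)
Definition is_form (t : nat) (f : R) : Prop :=
  all (fun m => mdeg m == t) (msupp f).

Definition gen_ideal (S : pset) : pset := fun f =>
  exists gs : seq (R * R),
    (forall gh, gh \in gs -> S gh.2) /\ f = \sum_(gh <- gs) gh.1 * gh.2.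

Definition ideal_mul (A B : pset) : pset :=
  gen_ideal (fun h => exists a b, A a /\ B b /\ h = a * b).

Fixpoint ideal_pow (J : pset) (k : nat) : pset :=
  match k with
  | 0%N => fun _ => True
  | k'.+1 => ideal_mul (ideal_pow J k') J
  end.

(* a point of P^N given by homogeneous coordinates *)
Definition coords := 'I_N.+1 -> K.

Definition Ipt (p : coords) : pset :=
  gen_ideal (fun h => exists t, is_form t h /\ h.@[p] = 0).

(* I(Z) = \bigcap_i I(p_i)^{m_i} for Z = m_1 p_1 + ... + m_s p_s *)
Definition IZ (s : nat) (p : 'I_s -> coords) (mult : 'I_s -> nat) : pset :=
  fun f => forall i, ideal_pow (Ipt (p i)) (mult i) f.

(* m-th symbolic power I^{(m)} = I(mZ) *)
Definition symb_pow (s : nat) (p : 'I_s -> coords) (mult : 'I_s -> nat)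
  (m : nat) : pset :=
  IZ p (fun i => (m * mult i)%N).

Definition comp_nonzero (J : pset) (t : nat) : Prop :=
  exists f, J f /\ is_form t f /\ f != 0.

Definition decP (P : Prop) : bool :=
  if excluded_middle_informative P then true else false.

(* alpha(J) = least t with [J]_t <> 0 (0 by convention if there is none) *)
Definition alpha (J : pset) : nat :=
  match excluded_middle_informative (exists t, comp_nonzero J t) with
  | left ex => ex_minn (P := fun t => decP (comp_nonzero J t))
                 (let: ex_intro t Ht := ex in
                  ex_intro _ t (match excluded_middle_informative
                                   (comp_nonzero J t) as b
                                   return ((if b then true else false) = true)
                                with left _ => erefl | right nH => False_ind _ (nH Ht) end))
  | right _ => 0%N
  end.

Definition alphahat (s : nat) (p : 'I_s -> coords) (mult : 'I_s -> nat) : Rdefinitions.R :=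
  real (Glb_Rbar (fun x => exists m : nat, (0 < m)%N /\
          x = Rdefinitions.Rdiv (INR (alpha (symb_pow p mult m))) (INR m))).

Definition same_comp (A B : pset) (j : nat) : Prop :=
  forall f, is_form j f -> (A f <-> B f).

(* satdeg(I^r) = least t with [I^r]_j = [I^{(r)}]_j for all j >= t
   (0 by convention if there is none) *)
Definition satdeg (s : nat) (p : 'I_s -> coords) (mult : 'I_s -> nat) (r : nat) : nat :=
  let P t := forall j, (t <= j)%N ->
               same_comp (ideal_pow (IZ p mult) r) (symb_pow p mult r) j in
  match excluded_middle_informative (exists t, P t) with
  | left ex => ex_minn (P := fun t => decP (P t))
                 (let: ex_intro t Ht := ex in
                  ex_intro _ t (match excluded_middle_informative (P t) as b
                                   return ((if b then true else false) = true)
                                with left _ => erefl | right nH => False_ind _ (nH Ht) end))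
  | right _ => 0%N
  end.

End FatPoints.

(* Main.v *)
Require Import Defs.
From Stdlib Require Import Reals.
From HB Require Import structures.
From mathcomp Require Import all_boot all_order all_algebra.
From mathcomp Require Import mpoly.
From Stdlib Require Import Lra ClassicalEpsilon.
From Coquelicot Require Import Rbar Lub.
From mathcomp Require Import zify.
Set Implicit Arguments.
Unset Strict Implicit.
Unset Printing Implicit Defensive.
Import GRing.Theory.
Local Open Scope ring_scope.


Section Ideals.
Variables (K : closedFieldType) (N : nat).
Local Notation R := {mpoly K[N.+1]}.
Local Notation gen := (@gen_ideal K N).

Lemma gen0 S : gen S 0.
Proof. by exists [::]; split => //; rewrite big_nil. Qed.

Lemma genD S f g : gen S f -> gen S g -> gen S (f + g).
Proof.
move=> [gs [H1 ->]] [hs [H2 ->]]; exists (gs ++ hs); split; last by rewrite big_cat.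
by move=> gh; rewrite mem_cat => /orP[/H1|/H2].
Qed.

Lemma genM S a f : gen S f -> gen S (a * f).
Proof.
move=> [gs [H1 ->]]; exists [seq (a * gh.1, gh.2) | gh <- gs]; split.
  by move=> gh /mapP[x /H1 Hx ->].
by rewrite big_map mulr_sumr; apply: eq_bigr => x _; rewrite mulrA.
Qed.

Lemma genMr S a f : gen S f -> gen S (f * a).
Proof. by rewrite mulrC; apply: genM. Qed.

Lemma genS (S : pset K N) h : S h -> gen S h.
Proof. by move=> Sh; exists [:: (1, h)]; split; [move=> gh; rewrite inE => /eqP -> | rewrite big_seq1 mul1r]. Qed.

Lemma genZ S c f : gen S f -> gen S (c *: f).
Proof. by rewrite -mul_mpolyC; apply: genM. Qed.

Lemma genN S f : gen S f -> gen S (- f).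
Proof. by move=> H; rewrite -scaleN1r; apply: genZ. Qed.

Lemma genB S f g : gen S f -> gen S g -> gen S (f - g).
Proof. by move=> Hf Hg; apply: genD => //; apply: genN. Qed.

Lemma gen_sum S (I : eqType) (r : seq I) (F : I -> R) :
  (forall i, i \in r -> gen S (F i)) -> gen S (\sum_(i <- r) F i).
Proof.
elim: r => [|x r IH] H; first by rewrite big_nil; apply: gen0.
rewrite big_cons; apply: genD; first by apply: H; rewrite inE eqxx.
by apply: IH => i Hi; apply: H; rewrite inE Hi orbT.
Qed.

Lemma gen_gen (S T : pset K N) f :
  (forall h, S h -> gen T h) -> gen S f -> gen T f.
Proof.
move=> H [gs [H1 ->]]; apply: gen_sum => gh /H1 /H; apply: genM.
Qed.

Lemma gen_mono (S T : pset K N) f :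
  (forall h, S h -> T h) -> gen S f -> gen T f.
Proof. by move=> H; apply: gen_gen => h /H; apply: genS. Qed.

Lemma gen_mul (S T U : pset K N) f g :
  (forall a b, S a -> T b -> gen U (a * b)) -> gen S f -> gen T g -> gen U (f * g).
Proof.
move=> H [gs [H1 ->]] [hs [H2 ->]].
rewrite mulr_suml; apply: gen_sum => x /H1 Sx.
rewrite mulr_sumr; apply: gen_sum => y /H2 Ty.
rewrite mulrACA; apply: genM; exact: H.
Qed.

Lemma pow_gen (J : pset K N) k f : gen (ideal_pow J k) f -> ideal_pow J k f.
Proof.
case: k => [//|k] /=; rewrite /ideal_mul.
by apply: gen_gen.
Qed.

Lemma pow_closed (J : pset K N) k :
  [/\ ideal_pow J k 0, (forall f g, ideal_pow J k f -> ideal_pow J k g -> ideal_pow J k (f + g))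
   & forall a f, ideal_pow J k f -> ideal_pow J k (a * f)].
Proof.
split.
- by apply: pow_gen; apply: gen0.
- by move=> f g Hf Hg; apply: pow_gen; apply: genD; apply: genS.
- by move=> a f Hf; apply: pow_gen; apply: genM; apply: genS.
Qed.

End Ideals.

Section LP.
Variables (K : closedFieldType) (N : nat).
Local Notation R := {mpoly K[N.+1]}.
Local Notation gen := (@gen_ideal K N).

Lemma formP t (f : R) : is_form t f <-> f \is t.-homog.
Proof. by rewrite /is_form dhomogE. Qed.

Definition LinV (q : coords K N) (h : R) := is_form 1 h /\ h.@[q] = 0.
Definition LP (q : coords K N) (n : nat) (h : R) :=
  exists vs : seq R, size vs = n /\ (forall v, v \in vs -> LinV q v) /\ h = \prod_(v <- vs) v.

Lemma LP0 q : LP q 0 1.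
Proof. by exists [::]; rewrite big_nil. Qed.

Lemma LP1 q v : LinV q v -> LP q 1 v.
Proof. by move=> H; exists [:: v]; split=> //; split; [move=> w; rewrite inE => /eqP -> | rewrite big_seq1]. Qed.

Lemma LP_mul q a b x y : LP q a x -> LP q b y -> LP q (a + b) (x * y).
Proof.
move=> [vs [s1 [h1 ->]]] [ws [s2 [h2 ->]]]; exists (vs ++ ws); split; first by rewrite size_cat s1 s2.
split; last by rewrite big_cat.
by move=> v; rewrite mem_cat => /orP[/h1|/h2].
Qed.

Lemma LP_split q a b z : LP q (a + b) z -> exists x y, [/\ LP q a x, LP q b y & z = x * y].
Proof.
move=> [vs [s1 [h1 ->]]]; exists (\prod_(v <- take a vs) v), (\prod_(v <- drop a vs) v).
split; last by rewrite -big_cat cat_take_drop.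
  - exists (take a vs); split; first by rewrite size_take s1; case: ltnP => // H; lia.
  by split=> // v /mem_take /h1.
- exists (drop a vs); split; first by rewrite size_drop s1 addKn.
  by split=> // v /mem_drop /h1.
Qed.

Lemma LP_exp q v e : LinV q v -> LP q e (v ^+ e).
Proof.
move=> H; elim: e => [|e IH]; first by rewrite expr0; apply: LP0.
by rewrite exprS mulrC -addn1; apply: LP_mul => //; apply: LP1.
Qed.

Lemma LP_form q n h : LP q n h -> is_form n h.
Proof.
move=> [vs [<- [H ->]]]; apply/formP; elim: vs H => [|v vs IH] H.
  by rewrite big_nil; apply: dhomog1.
rewrite big_cons /= (_ : (size vs).+1 = 1 + size vs)%N //; apply: dhomogM.
  by apply/formP; case: (H v); rewrite ?inE ?eqxx.
by apply: IH => w Hw; apply: H; rewrite inE Hw orbT.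
Qed.

Lemma genLP_mul q a b f g : gen (LP q a) f -> gen (LP q b) g -> gen (LP q (a + b)) (f * g).
Proof. by apply: gen_mul => x y Hx Hy; apply: genS; apply: LP_mul. Qed.

Lemma genLP_le q a b f : (b <= a)%N -> gen (LP q a) f -> gen (LP q b) f.
Proof.
move=> hba; apply: gen_gen => h; rewrite -(subnKC hba) => /LP_split [x [y [Hx Hy ->]]].
by apply: genMr; apply: genS.
Qed.

Lemma genLP_1 q f : gen (LP q 0) f.
Proof. by rewrite -[f]mulr1; apply: genM; apply: genS; apply: LP0. Qed.

Lemma genLP_exp q a e f : gen (LP q a) f -> gen (LP q (a * e)) (f ^+ e).
Proof.
move=> H; elim: e => [|e IH]; first by rewrite expr0 muln0; apply: genLP_1.
by rewrite exprS mulnS; apply: genLP_mul.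
Qed.

End LP.

Section Comp.
Variables (K : closedFieldType) (n : nat).
Local Notation R := {mpoly K[n]}.

Lemma comp_comp (lq lq' : n.-tuple R) (g : R) :
  (forall i, tnth lq i \mPo lq' = 'X_i) -> (g \mPo lq) \mPo lq' = g.
Proof.
move=> H; rewrite [g \mPo lq]comp_mpolyEX raddf_sum /= {3}[g]mpolyE; apply: eq_bigr => m _.
rewrite comp_mpolyZ; congr (_ *: _); rewrite comp_mpolyX rmorph_prod /= mpolyXE_id.
by apply: eq_bigr => i _; rewrite rmorphXn /= H.
Qed.

Lemma mnm_le_mdeg (m : 'X_{1..n}) k : (m k <= mdeg m)%N.
Proof. by rewrite mdegE (bigD1 k) //= leq_addr. Qed.

Definition Mon k d (g : R) := forall m, m \in msupp g -> (d + m k <= mdeg m)%N.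

Lemma Mon0 k d : Mon k d 0.
Proof. by move=> m; rewrite msupp0. Qed.

Lemma MonD k d f g : Mon k d f -> Mon k d g -> Mon k d (f + g).
Proof. by move=> Hf Hg m /msuppD_le; rewrite mem_cat => /orP[/Hf|/Hg]. Qed.

Lemma MonM k a b f g : Mon k a f -> Mon k b g -> Mon k (a + b) (f * g).
Proof.
move=> Hf Hg m /msuppM_le /allpairsP [[m1 m2] /= [/Hf h1 /Hg h2 ->]].
rewrite mdegD mnmDE; lia.
Qed.

Lemma Mon_any k (f : R) : Mon k 0 f.
Proof. by move=> m _; rewrite add0n mnm_le_mdeg. Qed.

Lemma MonMl k d f g : Mon k d g -> Mon k d (f * g).
Proof. by move=> H; rewrite -[d]add0n; apply: MonM => //; apply: Mon_any. Qed.

Lemma MonZ k d c f : Mon k d f -> Mon k d (c *: f).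
Proof. by rewrite -mul_mpolyC; apply: MonMl. Qed.

Lemma Mon_sum k d (I : eqType) (r : seq I) (F : I -> R) :
  (forall i, i \in r -> Mon k d (F i)) -> Mon k d (\sum_(i <- r) F i).
Proof.
elim: r => [|x r IH] H; first by rewrite big_nil; apply: Mon0.
rewrite big_cons; apply: MonD; first by apply: H; rewrite inE eqxx.
by apply: IH => i Hi; apply: H; rewrite inE Hi orbT.
Qed.

Lemma Mon_cancel k d e (g : R) : Mon k d ('X_k ^+ e * g) -> Mon k d g.
Proof.
move=> H m Hm; have := H (U_(k) *+ e + m)%MM.
rewrite mpolyXn mulrC mcoeff_msupp mcoeffMX -mcoeff_msupp => /(_ Hm).
rewrite mdegD mdegMn mdeg1 mnmDE mulmnE mnm1E eqxx; lia.
Qed.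

End Comp.

Section Point.
Variables (K : closedFieldType) (N : nat) (q : coords K N) (k : 'I_N.+1).
Hypothesis hk : q k != 0.
Local Notation R := {mpoly K[N.+1]}.
Local Notation gen := (@gen_ideal K N).

Definition sigt : N.+1.-tuple R :=
  [tuple (if i == k then q k *: 'X_k else 'X_i + q i *: 'X_k) | i < N.+1].
Definition taut : N.+1.-tuple R :=
  [tuple (if i == k then (q k)^-1 *: 'X_k else 'X_i - (q i / q k) *: 'X_k) | i < N.+1].
Definition sig (g : R) := g \mPo sigt.
Definition tau (g : R) := g \mPo taut.
Definition ell : R := (q k)^-1 *: 'X_k.

Lemma tnth_sigt i : tnth sigt i = if i == k then q k *: 'X_k else 'X_i + q i *: 'X_k.
Proof. by rewrite tnth_mktuple. Qed.
Lemma tnth_taut i : tnth taut i = if i == k then (q k)^-1 *: 'X_k else 'X_i - (q i / q k) *: 'X_k.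
Proof. by rewrite tnth_mktuple. Qed.

Lemma compXU (lq : N.+1.-tuple R) i : 'X_i \mPo lq = tnth lq i.
Proof. by rewrite comp_mpolyXU -tnth_nth. Qed.

Lemma tau_sig g : tau (sig g) = g.
Proof.
apply: comp_comp => i; rewrite tnth_sigt; case: eqP => [->|/eqP ne].
  by rewrite comp_mpolyZ compXU tnth_taut eqxx scalerA mulfV // scale1r.
rewrite comp_mpolyD comp_mpolyZ !compXU !tnth_taut eqxx (negbTE ne).
by rewrite scalerA mulrC subrK.
Qed.

Lemma sig_ell : sig ell = 'X_k.
Proof. by rewrite /sig /ell comp_mpolyZ compXU tnth_sigt eqxx scalerA mulVf // scale1r. Qed.

Lemma ell_eval : ell.@[q] = 1.
Proof. by rewrite /ell mevalZ mevalXU mulVf. Qed.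

Lemma ell_form : is_form 1 ell.
Proof. by apply/formP; apply: dhomogZ; rewrite dhomogX; apply/eqP; apply: mdeg1. Qed.

Definition ek : 'I_N.+1 -> K := fun i => (i == k)%:R.

Lemma sig_eval g : (sig g).@[ek] = g.@[q].
Proof.
rewrite /sig comp_mpoly_meval; apply: meval_eq => i; rewrite tnth_sigt /ek.
case: eqP => [->|/eqP ne]; first by rewrite mevalZ mevalXU eqxx mulr1.
by rewrite mevalD mevalZ !mevalXU eqxx (negbTE ne) mulr1 add0r.
Qed.

Lemma prod_form (lq : N.+1.-tuple R) (m : 'X_{1..N.+1}) :
  (forall i, is_form 1 (tnth lq i)) -> is_form (mdeg m) (\prod_(i < N.+1) tnth lq i ^+ m i).
Proof.
move=> H; rewrite mdegE; apply/formP; elim/big_ind2: _ => //; first exact: dhomog1.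
  by move=> a x b y Ha Hb; apply: dhomogM.
by move=> i _; have := dhomogMn (m i) (iffLR (formP _ _) (H i)); rewrite mul1n.
Qed.

Lemma sigt_form i : is_form 1 (tnth sigt i).
Proof.
apply/formP; rewrite tnth_sigt.
case: eqP => _; first by apply: dhomogZ; rewrite dhomogX; apply/eqP; apply: mdeg1.
by apply: rpredD; [|apply: dhomogZ]; rewrite dhomogX; apply/eqP; apply: mdeg1.
Qed.

Lemma taut_form i : is_form 1 (tnth taut i).
Proof.
apply/formP; rewrite tnth_taut.
case: eqP => _; first by apply: dhomogZ; rewrite dhomogX; apply/eqP; apply: mdeg1.
by apply: rpredB; [|apply: dhomogZ]; rewrite dhomogX; apply/eqP; apply: mdeg1.
Qed.

Lemma sig_form d g : is_form d g -> is_form d (sig g).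
Proof.
move/formP/dhomogP => H; apply/formP; rewrite /sig comp_mpolyE.
rewrite big_seq; apply: rpred_sum => m Hm; apply: rpredZ.
rewrite -(H m Hm); apply/formP; apply: prod_form; apply: sigt_form.
Qed.


Lemma taut_LinV i : i != k -> LinV q (tnth taut i).
Proof.
move=> ne; split; first exact: taut_form.
rewrite tnth_taut (negbTE ne) mevalB mevalZ !mevalXU -mulrA mulVf // mulr1 subrr //.
Qed.

Lemma taut_k : tnth taut k = ell.
Proof. by rewrite tnth_taut eqxx. Qed.

Lemma mdeg_split (m : 'X_{1..N.+1}) : mdeg m = (m k + \sum_(i | i != k) m i)%N.
Proof. by rewrite mdegE (bigD1 k). Qed.

Lemma tau_Mon d g : Mon k d g -> gen (LP q d) (tau g).
Proof.
move=> H; rewrite /tau comp_mpolyE; apply: gen_sum => m Hm.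
apply: genZ; rewrite (bigD1 k) //=; apply: genM.
apply: (@genLP_le _ _ _ (\sum_(i | i != k) m i)%N).
  by have := H m Hm; rewrite mdeg_split; lia.
apply: genS; elim/big_ind2: _ => //; first exact: LP0.
  by move=> a x b y Ha Hb; apply: LP_mul.
by move=> i ne; apply: LP_exp; apply: taut_LinV.
Qed.

Lemma mnm_single (m : 'X_{1..N.+1}) : m k = mdeg m -> m = (U_(k) *+ m k)%MM.
Proof.
move=> H; apply/mnmP => i; rewrite mulmnE mnm1E.
case: (eqVneq k i) => [->|ne]; first by rewrite mul1n.
rewrite mul0n; move: H; rewrite mdeg_split (bigD1 i) 1?eq_sym //=; lia.
Qed.

Lemma ek_mon (m : 'X_{1..N.+1}) :
  \prod_(i < N.+1) ek i ^+ m i = if m k == mdeg m then 1 else 0.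
Proof.
case: eqP => [H|H].
  rewrite big1 // => i _; rewrite /ek; case: (eqVneq i k) => [->|ne]; first by rewrite expr1n.
  by rewrite (mnm_single H) mulmnE mnm1E eq_sym (negbTE ne) mul0n expr0.
have [i [ne pos]] : exists i, i != k /\ (0 < m i)%N.
  case: (pickP (fun i => (i != k) && (0 < m i)%N)) => [i /andP [a b]|A]; first by exists i.
  exfalso; apply: H.
  rewrite mdeg_split big1 ?addn0 // => i ne; have := A i; rewrite ne /=; lia.
rewrite (bigD1 i) //= /ek (negbTE ne) expr0n; rewrite (_ : (m i == 0%N) = false); last by apply/negbTE; rewrite -lt0n.
by rewrite mul0r.
Qed.

Lemma VAN d h : is_form d h -> h.@[q] = 0 -> Mon k 1 (sig h).
Proof.
move=> Hf Hv; have /formP/dhomogP Hg := sig_form Hf; have := sig_eval h; rewrite Hv.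
move=> E m Hm; rewrite add1n ltnNge; apply/negP => Hle.
have mk : m k = mdeg m by apply/eqP; rewrite eqn_leq Hle mnm_le_mdeg.
move: E; rewrite mevalE (bigD1_seq m) ?msupp_uniq //= ek_mon mk eqxx mulr1.
rewrite big1_seq ?addr0; last first.
  move=> m' /andP [ne Hm']; rewrite ek_mon; case: eqP => [H|]; last by rewrite mulr0.
  move: ne; rewrite (mnm_single H) (mnm_single mk) H mk !Hg // eqxx //.
move=> E; move: Hm; rewrite mcoeff_msupp E eqxx //.
Qed.

Lemma sig_LP d f : gen (LP q d) f -> Mon k d (sig f).
Proof.
move=> [gs [H ->]]; rewrite /sig raddf_sum; apply: Mon_sum => gh /H [vs [<- [Hv ->]]] /=.
rewrite rmorphM /=; apply: MonMl; rewrite rmorph_prod /=.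
elim: vs Hv => [|v vs IH] Hv; first by rewrite big_nil; apply: Mon_any.
rewrite big_cons /= (_ : (size vs).+1 = 1 + size vs)%N //; apply: MonM.
  by case: (Hv v (mem_head _ _)) => F V; apply: VAN F V.
by apply: IH => w Hw; apply: Hv; rewrite inE Hw orbT.
Qed.

Lemma primary d e Phi : gen (LP q d) (ell ^+ e * Phi) -> gen (LP q d) Phi.
Proof.
move/sig_LP; rewrite /sig rmorphM rmorphXn /= -/(sig ell) sig_ell => /Mon_cancel.
by move/tau_Mon; rewrite -/(sig Phi) tau_sig.
Qed.

Lemma split_jet d e g : is_form e g -> (d <= e.+1)%N ->
  exists phi, gen (LP q d) (g - ell ^+ (e.+1 - d) * phi).
Proof.
move=> Hf hde; have /formP/dhomogP Hg := sig_form Hf.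
set c := (e.+1 - d)%N.
pose P := fun m : 'X_{1..N.+1} => (d + m k <= mdeg m)%N.
pose phi' := \sum_(m <- msupp (sig g) | ~~ P m) (sig g)@_m *: 'X_[m - U_(k) *+ c].
exists (tau phi').
have E : sig g = \sum_(m <- msupp (sig g) | P m) (sig g)@_m *: 'X_[m] + 'X_k ^+ c * phi'.
  rewrite {1}[sig g]mpolyE (bigID P) /=; congr (_ + _).
  rewrite /phi' mulr_sumr big_seq_cond [RHS]big_seq_cond; apply: eq_bigr => m /andP [Hm nP].
  rewrite -scalerAr mpolyXn -mpolyXD addmC submK //; apply/mnm_lepP => i.
  rewrite mulmnE mnm1E; case: (eqVneq k i) => [<-|_]; last by rewrite mul0n.
  by move: nP; rewrite /P Hg //; lia.
rewrite -{1}(tau_sig g) E /tau comp_mpolyD rmorphM rmorphXn /= compXU taut_k addrK.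
apply: tau_Mon; rewrite -big_filter; apply: Mon_sum => m; rewrite mem_filter => /andP [Pm _].
by apply: MonZ => m'; rewrite msuppX inE => /eqP ->.
Qed.

End Point.

Section Pow.
Variables (K : closedFieldType) (N : nat).
Local Notation R := {mpoly K[N.+1]}.
Local Notation gen := (@gen_ideal K N).

Lemma Ipt_LP (q : coords K N) f : (exists k, q k != 0) -> Ipt q f -> gen (LP q 1) f.
Proof.
move=> [k hk]; apply: gen_gen => h [t [Ht Hv]].
rewrite -(tau_sig hk h); apply: (tau_Mon hk). apply: (VAN hk Ht Hv).
Qed.

Lemma LP_pow (q : coords K N) n z : LP q n z -> ideal_pow (Ipt q) n z.
Proof.
elim: n z => [//|n IH] z Hz; have := @LP_split _ _ q n 1 z; rewrite addn1 => /(_ Hz).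
move=> [x [y [Hx Hy ->]]] /=; apply: genS; exists x, y; split; first exact: IH.
split => //; move: Hy => [[|v [|w vs]] [//= _ [Hv ->]]]; rewrite big_seq1.
by apply: genS; exists 1%N; apply: Hv; rewrite mem_head.
Qed.

Lemma genLP_pow (q : coords K N) n f : gen (LP q n) f -> ideal_pow (Ipt q) n f.
Proof. by move=> H; apply: pow_gen; apply: gen_mono H => z; apply: LP_pow. Qed.

Lemma pow_genLP (q : coords K N) n f : (exists k, q k != 0) ->
  ideal_pow (Ipt q) n f -> gen (LP q n) f.
Proof.
move=> hq; elim: n f => [|n IH] f /=; first by move=> _; apply: genLP_1.
apply: gen_gen => h [a [b [Ha [Hb ->]]]]; rewrite (_ : n.+1 = n + 1)%N; last by rewrite addn1.
by apply: genLP_mul; [apply: IH | apply: Ipt_LP].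
Qed.

Lemma pihomog_mul_form (g h : R) t d : is_form t h ->
  pihomog mdeg d (g * h) = if (t <= d)%N then pihomog mdeg (d - t) g * h else 0.
Proof.
move=> /formP Ht; set B := (msize g + d.+1)%N.
rewrite {1}(@pihomog_partitionE _ _ mdeg B g); last by rewrite leq_addr.
rewrite mulr_suml raddf_sum /=.
rewrite (eq_bigr (fun e : 'I_B => if (e + t == d)%N then pihomog mdeg e g * h else 0)); last first.
  move=> e _; have He : pihomog mdeg e g * h \is (e + t).-homog by apply: dhomogM => //; apply: pihomogP.
  case: eqP => [<-|/eqP ne]; first by rewrite pihomog_dE.
  by apply: pihomog_ne0 He.
rewrite -big_mkcond /=; case: leqP => htd.
  have lt : (d - t < B)%N by rewrite /B; lia.
  rewrite (big_pred1 (Ordinal lt)) // => e /=; apply/eqP/eqP => [E|E].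
    by apply: val_inj => /=; lia.
  by rewrite E /=; lia.
by rewrite big_pred0 // => e; apply/eqP; lia.
Qed.

Lemma gen_homog (S : pset K N) f d : (forall h, S h -> exists t, is_form t h) ->
  gen S f -> gen S (pihomog mdeg d f).
Proof.
move=> HS [gs [H ->]]; rewrite raddf_sum; apply: gen_sum => gh /H Sh /=.
have [t Ht] := HS _ Sh; rewrite (pihomog_mul_form _ _ Ht).
by case: ifP => _; [apply: genM; apply: genS | apply: gen0].
Qed.

Lemma genLP_homog q n f d : gen (LP q n) f -> gen (LP q n) (pihomog mdeg d f).
Proof. by apply: gen_homog => h Hh; exists n; apply: LP_form Hh. Qed.

Lemma genLP_deg q n f d : gen (LP q n) f -> is_form d f -> f != 0 -> (n <= d)%N.
Proof.
move=> [gs [H E]] Hf; rewrite leqNgt; apply: contra => lt; apply/eqP.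
move/formP: Hf => /pihomog_dE <-; rewrite E raddf_sum big1_seq // => gh /andP [_ /H Hl] /=.
by rewrite (pihomog_mul_form _ _ (LP_form Hl)) leqNgt lt.
Qed.

End Pow.

Section RealPart.
Local Open Scope R_scope.

Lemma real_part (sd A r m : nat) (E : R -> Prop) : (0 < m)%coq_nat ->
  E (INR A / INR m) -> (forall x, E x -> 1 <= x) ->
  (Rmax (INR sd / real (Glb_Rbar E)) (INR r) <= INR m) ->
  (sd <= A)%coq_nat /\ (r <= m)%coq_nat.
Proof.
move=> hm HA Hlb Hle.
have [H1 H2] := Glb_Rbar_correct E.
have L1 : Rbar_le (Rbar.Finite 1) (Glb_Rbar E) by apply: H2 => x Ex; apply: Hlb.
have L2 : Rbar_le (Glb_Rbar E) (INR A / INR m) by apply: H1.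
have hmR : (0 < INR m) by apply: lt_0_INR.
case: (Glb_Rbar E) L1 L2 Hle => [a| |] //= L1 L2 Hle.
split; last by apply: INR_le; apply: Rle_trans (Rmax_r _ _) Hle.
apply: INR_le.
have Hq := Rle_trans _ _ _ (Rmax_l _ _) Hle.
have ha : (0 < a) by lra.
have E1 : (INR sd = INR sd / a * a) by field; lra.
have E2 : (INR m * (INR A / INR m) = INR A) by field; lra.
rewrite E1 -E2.
apply: Rle_trans (Rmult_le_compat_r _ _ _ (Rlt_le _ _ ha) Hq) _.
apply Rmult_le_compat_l; lra.
Qed.

End RealPart.

From mathcomp Require Import ring.

Section Sat.
Variables (K : closedFieldType) (N s : nat) (p : 'I_s -> coords K N).
Hypothesis hp : forall i, exists k, p i k != 0.
Hypothesis hsep : forall i j, i != j -> ~ exists c : K, forall k, p i k = c * p j k.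
Local Notation R := {mpoly K[N.+1]}.
Local Notation gen := (@gen_ideal K N).

Fixpoint Good (nn : 'I_s -> nat) (l : seq 'I_s) : R -> Prop :=
  match l with
  | [::] => fun z => z = 1
  | i :: l' => fun z => exists c lam, [/\ Good nn l' c, LP (p i) (nn i) lam & z = c * lam]
  end.

Lemma Good_form nn l z : Good nn l z -> is_form (\sum_(i <- l) nn i) z.
Proof.
elim: l z => [|i l IH] z /=; first by move=> ->; rewrite big_nil; apply/formP; apply: dhomog1.
move=> [c [lam [Hc Hl ->]]]; rewrite big_cons addnC; apply/formP; apply: dhomogM; apply/formP.
  exact: IH.
exact: LP_form Hl.
Qed.

Lemma Good_LP nn l z : Good nn l z -> forall i, i \in l -> gen (LP (p i) (nn i)) z.
Proof.
elim: l z => [//|j l IH] z /= [c [lam [Hc Hl ->]]] i; rewrite inE => /orP [/eqP ->|Hi].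
  by apply: genM; apply: genS.
by apply: genMr; apply: IH.
Qed.

Lemma sepL i j : i != j -> exists v, LinV (p j) v /\ v.@[p i] != 0.
Proof.
move=> ne; have [a ha] := hp j.
pose v (b : 'I_N.+1) : R := p j a *: 'X_b - p j b *: 'X_a.
have Lv b : LinV (p j) (v b).
  split.
    by apply/formP; apply: rpredB; apply: dhomogZ; rewrite dhomogX; apply/eqP; apply: mdeg1.
  by rewrite /v mevalB !mevalZ !mevalXU mulrC subrr.
case: (pickP (fun b => (v b).@[p i] != 0)) => [b Hb|A]; first by exists (v b).
exfalso; apply: (hsep ne); exists (p i a / p j a) => b.
have := A b; rewrite /v mevalB !mevalZ !mevalXU subr_eq0 /= => /eqP E.
by apply: (mulfI ha); rewrite E; field.
Qed.

Lemma Good_unit nn i l : i \notin l -> exists c1, Good nn l c1 /\ c1.@[p i] != 0.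
Proof.
elim: l => [|j l IH] /=; first by move=> _; exists 1; split => //; rewrite meval1 oner_neq0.
rewrite inE negb_or => /andP [ne /IH [c [Hc Hc0]]].
have [v [Lv Hv]] := sepL ne.
exists (c * v ^+ nn j); split; first by exists c, (v ^+ nn j); split => //; apply: LP_exp.
by rewrite mevalM rmorphXn /= mulf_neq0 // expf_neq0.
Qed.

Lemma gen_Good_mul nn i l c a : gen (Good nn l) c -> gen (LP (p i) (nn i)) a ->
  gen (Good nn (i :: l)) (c * a).
Proof. by apply: gen_mul => x y Hx Hy; apply: genS; exists x, y. Qed.

Lemma gen_Good_LP nn i l f : gen (Good nn (i :: l)) f -> gen (LP (p i) (nn i)) f.
Proof. by apply: gen_gen => z [c [lam [_ Hl ->]]]; apply: genM; apply: genS. Qed.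

Lemma KEY nn i l D f : i \notin l ->
  let c := (\sum_(j <- l) nn j)%N in let n := nn i in
  (c + n + c * n <= D)%N -> is_form D f ->
  gen (Good nn l) f -> gen (LP (p i) n) f -> gen (Good nn (i :: l)) f.
Proof.
move=> nil c n hD hf Hf HA; have hcD : (c <= D)%N by lia.
have [k hk] := hp i; set q := p i in HA *.
set e := (D - c)%N; set M := (e.+1 - n)%N; set ell' := ell q k.
move: Hf => [gs [Hgs Ef]].
have Ef' : f = \sum_(gh <- gs) pihomog mdeg e gh.1 * gh.2.
  rewrite -(pihomog_dE (iffLR (formP _ _) hf)) Ef raddf_sum; apply: eq_big_seq => gh /Hgs Hg /=.
  by rewrite (pihomog_mul_form _ _ (Good_form Hg)) ifT //; exact: hcD.
have [Phi [HPhi HR]] : exists Phi, gen (Good nn l) Phi /\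
    gen (Good nn (i :: l)) (\sum_(gh <- gs) pihomog mdeg e gh.1 * gh.2 - ell' ^+ M * Phi).
  elim: gs Hgs {Ef Ef'} => [|gh gs IH] Hgs.
    by exists 0; rewrite big_nil mulr0 subrr; split; apply: gen0.
  have Hgs' : forall x, x \in gs -> Good nn l x.2 by move=> x Hx; apply: Hgs; rewrite inE Hx orbT.
  have [Phi [HP HR]] := IH Hgs'.
  have Hg := Hgs gh (mem_head _ _).
  have [phi Hphi] := split_jet hk (d := n) (pihomogP mdeg e gh.1) ltac:(lia).
  exists (phi * gh.2 + Phi); split.
    by apply: genD => //; apply: genM; apply: genS.
  rewrite big_cons.
  have -> : pihomog mdeg e gh.1 * gh.2 + \sum_(j <- gs) pihomog mdeg e j.1 * j.2 -
     ell' ^+ M * (phi * gh.2 + Phi) =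
     gh.2 * (pihomog mdeg e gh.1 - ell' ^+ M * phi) +
     (\sum_(j <- gs) pihomog mdeg e j.1 * j.2 - ell' ^+ M * Phi) by ring.
  by apply: genD => //; apply: gen_Good_mul => //; apply: genS.
rewrite -Ef' in HR.
have HP2 : gen (LP q n) Phi.
  apply: (primary hk (e := M)).
  have -> : ell' ^+ M * Phi = f - (f - ell' ^+ M * Phi) by ring.
  by apply: genB => //; apply: gen_Good_LP HR.
have [c1 [Hc1 Hc10]] := Good_unit nn nil; set a := c1.@[q] in Hc10.
set ht := a *: ell' ^+ c - c1.
have Fc1 := Good_form Hc1; rewrite -/c in Fc1.
have Fl : is_form c (ell' ^+ c).
  by apply/formP; have := dhomogMn c (iffLR (formP _ _) (ell_form q k)); rewrite mul1n.
have Fht : is_form c ht by apply/formP; apply: rpredB; [apply: dhomogZ|]; apply/formP.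
have Vht : ht.@[q] = 0 by rewrite mevalB mevalZ rmorphXn /= ell_eval // expr1n mulr1 subrr.
have Hht : gen (LP q 1) ht by rewrite -(tau_sig hk ht); apply: (tau_Mon hk); apply: (VAN hk Fht Vht).
have Hhtn : gen (LP q n) (ht ^+ n) by have := genLP_exp n Hht; rewrite mul1n.
set U := \sum_(j < n) (a *: ell' ^+ c) ^+ (n.-1 - j) * ht ^+ j.
have EU : a ^+ n *: ell' ^+ (c * n) = c1 * U + ht ^+ n.
  have E1 : (a *: ell' ^+ c) ^+ n - ht ^+ n = c1 * U.
    by rewrite subrXX /ht opprB addrC subrK.
  by rewrite exprM -exprZn -E1 subrK.
have EM : ell' ^+ M = a ^- n *: (ell' ^+ (M - c * n) * (c1 * U + ht ^+ n)).
  rewrite -EU -scalerAr scalerA mulVf ?expf_neq0 // scale1r -exprD subnK //; lia.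
have -> : f = ell' ^+ M * Phi + (f - ell' ^+ M * Phi) by rewrite addrC subrK.
apply: genD => //; rewrite EM -scalerAl; apply: genZ.
rewrite mulrDr mulrDl; apply: genD.
  have -> : ell' ^+ (M - c * n) * (c1 * U) * Phi = c1 * (ell' ^+ (M - c * n) * U * Phi) by ring.
  by apply: gen_Good_mul; [apply: genS | apply: genM].
have -> : ell' ^+ (M - c * n) * ht ^+ n * Phi = (ell' ^+ (M - c * n) * Phi) * ht ^+ n by ring.
by apply: gen_Good_mul => //; apply: genM.
Qed.


Lemma SAT nn l : uniq l -> exists T, forall D f, (T <= D)%N -> is_form D f ->
  (forall i, i \in l -> gen (LP (p i) (nn i)) f) -> gen (Good nn l) f.
Proof.
elim: l => [|i l IH] /=.
  by move=> _; exists 0%N => D f _ _ _; rewrite -[f]mulr1; apply: genM; apply: genS.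
move=> /andP [nil /IH [T HT]].
exists (maxn T ((\sum_(j <- l) nn j) + nn i + (\sum_(j <- l) nn j) * nn i))%N => D f hD hf H.
rewrite geq_max in hD; case/andP: hD => h1 h2.
apply: (KEY nil h2 hf).
  by apply: (HT D) => // j Hj; apply: H; rewrite inE Hj orbT.
by apply: H; rewrite mem_head.
Qed.

Lemma LP_blocks q r m z : LP q (r * m) z ->
  exists zs : seq R, [/\ size zs = r, forall y, y \in zs -> LP q m y & z = \prod_(y <- zs) y].
Proof.
elim: r z => [|r IH] z.
  rewrite mul0n => -[vs [Hs [_ ->]]]; move/size0nil: Hs => ->.
  by exists [::]; split => //; rewrite !big_nil.
rewrite mulSn => /LP_split [x [y [Hx /IH [zs [Hs Hz ->]] ->]]].
exists (x :: zs); split; first by rewrite /= Hs.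
  by move=> w; rewrite inE => /orP [/eqP ->|/Hz].
by rewrite big_cons.
Qed.

Lemma Good_blocks nn r l z : Good (fun i => r * nn i)%N l z ->
  exists zs : seq R, [/\ size zs = r, forall y, y \in zs -> Good nn l y & z = \prod_(y <- zs) y].
Proof.
elim: l z => [|i l IH] z /=.
  move=> ->; exists (nseq r 1); split; first by rewrite size_nseq.
    by move=> y /nseqP [->].
  by rewrite big1_seq // => y /andP [_ /nseqP [->]].
move=> [c [lam [/IH [zs [Hs Hz ->]] /LP_blocks [ls [Hls Hl ->]] ->]]].
exists [seq x.1 * x.2 | x <- zip zs ls]; split.
- by rewrite size_map size_zip Hs Hls minnn.
- move=> y /mapP [x Hx ->]; exists x.1, x.2; split => //.
    by apply: Hz; rewrite -(@unzip1_zip _ _ zs ls) ?Hs ?Hls //; apply: map_f.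
  by apply: Hl; rewrite -(@unzip2_zip _ _ zs ls) ?Hs ?Hls //; apply: map_f.
- rewrite big_map big_split /=.
  congr (_ * _); [rewrite -{1}(@unzip1_zip _ _ zs ls) | rewrite -{1}(@unzip2_zip _ _ zs ls)]; rewrite ?Hs ?Hls // big_map //.
Qed.

Lemma prod_pow (J : pset K N) (zs : seq R) :
  (forall y, y \in zs -> J y) -> ideal_pow J (size zs) (\prod_(y <- zs) y).
Proof.
elim: zs => [|y zs IH] H //=; rewrite big_cons; apply: genS.
exists (\prod_(j <- zs) j), y; split; first by apply: IH => w Hw; apply: H; rewrite inE Hw orbT.
by split; [apply: H; rewrite mem_head | rewrite mulrC].
Qed.

Variable mult : 'I_s -> nat.

Lemma EASY r f i : ideal_pow (IZ p mult) r f -> gen (LP (p i) (r * mult i)) f.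
Proof.
elim: r f => [|r IH] f /=; first by rewrite mul0n => _; apply: genLP_1.
apply: gen_gen => h [a [b [Ha [Hb ->]]]]; rewrite mulSnr.
by apply: genLP_mul; [apply: IH | apply: pow_genLP (hp i) (Hb i)].
Qed.

Lemma Good_IZ y : Good mult (enum 'I_s) y -> IZ p mult y.
Proof. by move=> H i; apply: genLP_pow; apply: Good_LP H _ _; rewrite mem_enum. Qed.

Lemma satur r : exists T, forall j, (T <= j)%N ->
  same_comp (ideal_pow (IZ p mult) r) (symb_pow p mult r) j.
Proof.
have [T HT] := SAT (fun i => r * mult i)%N (enum_uniq 'I_s).
exists T => j hj f hf; split.
  by move=> H i; apply: genLP_pow; apply: EASY.
move=> H; have := HT j f hj hf (fun i _ => pow_genLP (hp i) (H i)).
move=> HG; apply: pow_gen; apply: gen_mono HG => z /Good_blocks [zs [Hs Hz ->]].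
by rewrite -Hs; apply: prod_pow => y /Hz; apply: Good_IZ.
Qed.

End Sat.


Section Main.
Local Open Scope ring_scope.
Variables (K : closedFieldType) (N s : nat) (p : 'I_s -> coords K N) (mult : 'I_s -> nat).
Hypothesis hp : forall i, exists k, p i k != 0.
Local Notation R := {mpoly K[N.+1]}.
Local Notation gen := (@gen_ideal K N).

Lemma decPP (P : Prop) : Defs.decP P = true <-> P.
Proof. by rewrite /Defs.decP; case: excluded_middle_informative. Qed.

Lemma alpha_spec (J : pset K N) : (exists t, comp_nonzero J t) ->
  comp_nonzero J (alpha J) /\ forall t, comp_nonzero J t -> (alpha J <= t)%N.
Proof.
move=> ex; rewrite /alpha; case: excluded_middle_informative => [ex'|//].
case: ex_minnP => a Ha Hmin; split; first by apply/decPP.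
by move=> t /decPP /Hmin.
Qed.

Lemma satdeg_spec r :
  (exists t, forall j, (t <= j)%N -> same_comp (ideal_pow (IZ p mult) r) (symb_pow p mult r) j) ->
  forall j, (satdeg p mult r <= j)%N -> same_comp (ideal_pow (IZ p mult) r) (symb_pow p mult r) j.
Proof.
move=> ex; rewrite /satdeg; case: excluded_middle_informative => [ex'|//].
by case: ex_minnP => a /decPP Ha _.
Qed.

Lemma symb_gen m f : symb_pow p mult m f <-> forall i, gen (LP (p i) (m * mult i)) f.
Proof.
split => H i; first by apply: pow_genLP (hp i) (H i).
by apply: genLP_pow.
Qed.

Lemma symb_homog m f d : symb_pow p mult m f -> symb_pow p mult m (pihomog mdeg d f).
Proof. by move/symb_gen => H; apply/symb_gen => i; apply: genLP_homog. Qed.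

Lemma symb_mono r m f : (r <= m)%N -> symb_pow p mult m f -> symb_pow p mult r f.
Proof.
move=> hrm /symb_gen H; apply/symb_gen => i; apply: genLP_le (H i).
by rewrite leq_mul2r hrm orbT.
Qed.

End Main.

Section Final.
Local Open Scope ring_scope.

Theorem proposition3p2 (K : closedFieldType) (N s : nat)
  (p : 'I_s -> coords K N) (mult : 'I_s -> nat) (m r : nat) :
  (forall i, exists k, p i k != 0%R) ->
  (forall i j, i != j -> ~ exists c : K, forall k, p i k = (c * p j k)%R) ->
  (exists i, mult i != 0%N) ->
  (0 < m)%N -> (0 < r)%N ->
  Rle (Rmax (Rdiv (INR (satdeg p mult r)) (alphahat p mult)) (INR r)) (INR m) ->
  forall f, symb_pow p mult m f -> ideal_pow (IZ p mult) r f.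
Proof.
move=> hp hsep [i0 hi0] hm hr Hle f Hf.
have [c0 Hc0 Hca] := pow_closed (IZ p mult) r.
have Hsum : forall (I : eqType) (l : seq I) (F : I -> {mpoly K[N.+1]}),
    (forall i, i \in l -> ideal_pow (IZ p mult) r (F i)) ->
    ideal_pow (IZ p mult) r (\sum_(i <- l) F i)%R.
  move=> I l F; elim: l => [|x l IH] H; first by rewrite big_nil.
  rewrite big_cons; apply: Hc0; first by apply: H; rewrite inE eqxx.
  by apply: IH => i Hi; apply: H; rewrite inE Hi orbT.
rewrite (@pihomog_partitionE _ _ mdeg _ f (leqnn _)); apply: Hsum => d _.
case: (eqVneq (pihomog mdeg d f) 0%R) => [->//|nz].
have Hd : symb_pow p mult m (pihomog mdeg d f) by apply: symb_homog.
have CN : comp_nonzero (symb_pow p mult m) d.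
  by exists (pihomog mdeg d f); split => //; split => //; apply/formP; apply: pihomogP.
have [[F [HF [FF nzF]]] Amin] := alpha_spec (ex_intro (fun t => comp_nonzero _ t) _ CN).
set A := alpha (symb_pow p mult m) in HF FF nzF Amin.
have Hall : forall m', (0 < m')%N -> comp_nonzero (symb_pow p mult m') (A * m').
  move=> m' hm'; exists (F ^+ m'); split; last split.
  - move/(symb_gen mult hp): HF => HF; apply/(symb_gen mult hp) => i.
    apply: genLP_le (genLP_exp m' (HF i)). rewrite mulnC leq_mul2r; apply/orP; right.
    by rewrite leq_pmull.
  - by apply/formP; apply: dhomogMn; apply/formP.
  - by rewrite expf_neq0.
have Hge : forall m', (0 < m')%N -> (m' <= alpha (symb_pow p mult m'))%N.
  move=> m' hm'; have [[G [HG [FG nzG]]] _] := alpha_spec (ex_intro (fun t => comp_nonzero _ t) _ (Hall m' hm')).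
  move/(symb_gen mult hp): HG => /(_ i0) HG; have := genLP_deg HG FG nzG.
  by move/(leq_trans _); apply; rewrite leq_pmulr // lt0n.
have [hsd hrm] : (satdeg p mult r <= A)%coq_nat /\ (r <= m)%coq_nat.
  move: Hle; rewrite /alphahat => Hle; apply: (@real_part _ A _ _ _ _ _ _ Hle); first by apply/ltP.
    by exists m; split.
  move=> x [m' [hm' ->]]; have := Hge m' hm'; move/leP/le_INR => H.
  have H0 : Rlt 0 (INR m') by apply: lt_0_INR; apply/ltP.
  apply: (Rmult_le_reg_r (INR m')) => //; rewrite Rmult_1_l /Rdiv Rmult_assoc Rinv_l ?Rmult_1_r //.
  by apply: Rgt_not_eq.
move/leP: hsd => hsd; move/leP: hrm => hrm.
have [T HT] := satur hp hsep mult r.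
have Hsd := satdeg_spec (ex_intro _ T HT).
apply/(Hsd d (leq_trans hsd (Amin _ CN))); first by apply/formP; apply: pihomogP.
by apply: symb_mono hrm Hd.
Qed.

End Final.
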